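(* Let $X$ be a connected, locally path connected space and $H\le\pi_1(X,x_0)$. Then $X$ is semilocally path $H$-connected if and only if $H$ is an open subgroup of $\pi_1^{qtop}(X,x_0)$.
   Context: $X$ is semilocally path $H$-connected if for every path $\alpha$ starting at $x_0$ there is an open neighborhood $U_\alpha$ of $\alpha(1)$ with $i_*\pi_1(U_\alpha,\alpha(1))\le[\alpha^{-1}H\alpha]$, where $[\alpha^{-1}H\alpha]=\{[\alpha^{-1}*\gamma*\alpha]:[\gamma]\in H\}\le\pi_1(X,\alpha(1))$ and $i$ is inclusion. $\pi_1^{qtop}(X,x_0)$ is $\pi_1(X,x_0)$ with the quotient topology induced from the compact-open topology on the space of loops at $x_0$. *)

(* Defs.v *)
From Stdlib Require Import Reals Rtopology List.
Open Scope R_scope.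

Definition is_topology {X : Type} (op : (X -> Prop) -> Prop) : Prop :=
  op (fun _ => True) /\
  (forall U V, op U -> op V -> op (fun x => U x /\ V x)) /\
  (forall F : (X -> Prop) -> Prop, (forall U, F U -> op U) ->
      op (fun x => exists U, F U /\ U x)).

Definition inI (t : R) : Prop := 0 <= t <= 1.

(** A path in X is a function R -> X continuous on [0,1] (values outside
    [0,1] are irrelevant); continuity uses the subspace topology of [0,1]. *)
Definition is_path {X : Type} (op : (X -> Prop) -> Prop) (p : R -> X) : Prop :=
  forall V, op V -> forall t, inI t -> V (p t) ->
    exists eps, eps > 0 /\ forall s, inI s -> Rabs (s - t) < eps -> V (p s).

Definition path_in {X : Type} (op : (X -> Prop) -> Prop) (U : X -> Prop)
  (p : R -> X) : Prop := is_path op p /\ forall t, inI t -> U (p t).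

Definition is_loop {X : Type} (op : (X -> Prop) -> Prop) (x : X) (p : R -> X)
  : Prop := is_path op p /\ p 0 = x /\ p 1 = x.

Definition pconcat {X : Type} (p q : R -> X) : R -> X :=
  fun t => if Rle_dec t (1/2) then p (2 * t) else q (2 * t - 1).
Definition prev {X : Type} (p : R -> X) : R -> X := fun t => p (1 - t).
Definition pconst {X : Type} (x : X) : R -> X := fun _ => x.

Definition path_homotopic {X : Type} (op : (X -> Prop) -> Prop)
  (p q : R -> X) : Prop :=
  exists F : R -> R -> X,
    (forall V, op V -> forall s t, inI s -> inI t -> V (F s t) ->
       exists eps, eps > 0 /\ forall s' t', inI s' -> inI t' ->
         Rabs (s' - s) < eps -> Rabs (t' - t) < eps -> V (F s' t')) /\
    (forall s, inI s -> F s 0 = p s /\ F s 1 = q s) /\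
    (forall t, inI t -> F 0 t = p 0 /\ F 1 t = p 1).

(** A subgroup H <= pi_1(X,x0), represented (as usual for subsets of a
    quotient) by the saturated set of loops whose classes lie in H. *)
Definition is_pi1_subgroup {X : Type} (op : (X -> Prop) -> Prop) (x0 : X)
  (H : (R -> X) -> Prop) : Prop :=
  (forall p, H p -> is_loop op x0 p) /\
  (forall p q, H p -> path_homotopic op p q -> H q) /\
  H (pconst x0) /\
  (forall p q, H p -> H q -> H (pconcat p q)) /\
  (forall p, H p -> H (prev p)).

Definition connected {X : Type} (op : (X -> Prop) -> Prop) : Prop :=
  forall U, op U -> op (fun x => ~ U x) ->
    (forall x, U x) \/ (forall x, ~ U x).

Definition path_connected_set {X : Type} (op : (X -> Prop) -> Prop)
  (V : X -> Prop) : Prop :=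
  forall x y, V x -> V y ->
    exists p, path_in op V p /\ p 0 = x /\ p 1 = y.

Definition locally_path_connected {X : Type} (op : (X -> Prop) -> Prop)
  : Prop :=
  forall U x, op U -> U x ->
    exists V, op V /\ V x /\ (forall y, V y -> U y) /\ path_connected_set op V.

(** * Semilocally path H-connected:
    for every path a from x0 there is an open U containing a(1) such that
    every loop b at a(1) in U is homotopic (in X) to a^{-1} * g * a
    for some [g] in H, i.e. i_* pi_1(U,a(1)) <= [a^{-1} H a]. *)
Definition semilocally_path_H_connected {X : Type}
  (op : (X -> Prop) -> Prop) (x0 : X) (H : (R -> X) -> Prop) : Prop :=
  forall a, is_path op a -> a 0 = x0 ->
    exists U, op U /\ U (a 1) /\
      forall b, path_in op U b -> b 0 = a 1 -> b 1 = a 1 ->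
        exists g, H g /\ path_homotopic op b (pconcat (pconcat (prev a) g) a).

Definition subbasic {X : Type} (op : (X -> Prop) -> Prop)
  (KV : (R -> Prop) * (X -> Prop)) : Prop :=
  compact (fst KV) /\ (forall t, fst KV t -> inI t) /\ op (snd KV).

Definition in_subbasic {X : Type} (KV : (R -> Prop) * (X -> Prop))
  (f : R -> X) : Prop := forall t, fst KV t -> snd KV (f t).

(** S (a set of loops at x0) is open in the compact-open topology on
    Omega(X,x0): every point has a basic neighbourhood (finite intersection
    of subbasic sets, intersected with the loop space) inside S. *)
Definition co_open_loops {X : Type} (op : (X -> Prop) -> Prop) (x0 : X)
  (S : (R -> X) -> Prop) : Prop :=
  forall f, S f ->
    exists l : list ((R -> Prop) * (X -> Prop)),
      (forall KV, In KV l -> subbasic op KV) /\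
      (forall KV, In KV l -> in_subbasic KV f) /\
      (forall g, is_loop op x0 g ->
         (forall KV, In KV l -> in_subbasic KV g) -> S g).

(** H is open in pi_1^{qtop}(X,x0): by definition of the quotient topology,
    its preimage in Omega(X,x0) (= the saturated set of loops H) is open. *)
Definition open_in_pi1_qtop {X : Type} (op : (X -> Prop) -> Prop) (x0 : X)
  (H : (R -> X) -> Prop) : Prop := co_open_loops op x0 H.

(* Main.v *)
Require Import Defs.
From Stdlib Require Import Reals Rtopology List Lra Classical.
Open Scope R_scope.

Definition cont2 {X : Type} (op : (X -> Prop) -> Prop) (F : R -> R -> X) : Prop :=
  forall V, op V -> forall s t, inI s -> inI t -> V (F s t) ->
   exists eps, eps > 0 /\ forall s' t', inI s' -> inI t' ->
     Rabs (s' - s) < eps -> Rabs (t' - t) < eps -> V (F s' t').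

Definition lip2 (g : R -> R -> R) : Prop := exists L, 0 < L /\
  forall s t s' t', inI s -> inI t -> inI s' -> inI t' ->
    Rabs (g s' t' - g s t) <= L * (Rabs (s' - s) + Rabs (t' - t)).
Definition maps2 (g : R -> R -> R) : Prop := forall s t, inI s -> inI t -> inI (g s t).
Definition lip1 (g : R -> R) : Prop := exists L, 0 < L /\
  forall s s', inI s -> inI s' -> Rabs (g s' - g s) <= L * Rabs (s' - s).
Definition maps1 (g : R -> R) : Prop := forall s, inI s -> inI (g s).

Lemma cont2_ext {X} op (F G : R -> R -> X) :
  cont2 op F -> (forall s t, inI s -> inI t -> F s t = G s t) -> cont2 op G.
Proof.
  intros HF E V HV s t Hs Ht HG. rewrite <- E in HG by assumption.
  destruct (HF V HV s t Hs Ht HG) as [e [He Hc]]. exists e; split; auto.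
  intros s' t' Hs' Ht' H1 H2. rewrite <- E by assumption. auto.
Qed.

Lemma cont2_swap {X} op (F : R -> R -> X) :
  cont2 op F -> cont2 op (fun s t => F t s).
Proof.
  intros HF V HV s t Hs Ht HG.
  destruct (HF V HV t s Ht Hs HG) as [e [He Hc]]. exists e; split; auto.
Qed.

Lemma cont2_comp {X} op (F : R -> R -> X) g h :
  cont2 op F -> lip2 g -> lip2 h -> maps2 g -> maps2 h ->
  cont2 op (fun s t => F (g s t) (h s t)).
Proof.
  intros HF [L1 [HL1 Hg]] [L2 [HL2 Hh]] Mg Mh V HV s t Hs Ht HG.
  destruct (HF V HV _ _ (Mg s t Hs Ht) (Mh s t Hs Ht) HG) as [e [He Hc]].
  exists (Rmin (e / (2 * L1)) (e / (2 * L2))). split.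
  { apply Rmin_pos; apply Rdiv_lt_0_compat; lra. }
  intros s' t' Hs' Ht' H1 H2.
  assert (d1 : Rabs (s' - s) + Rabs (t' - t) < e / (2*L1) + e/(2*L1)).
  { pose proof (Rmin_l (e / (2 * L1)) (e / (2 * L2))). lra. }
  assert (d2 : Rabs (s' - s) + Rabs (t' - t) < e / (2*L2) + e/(2*L2)).
  { pose proof (Rmin_r (e / (2 * L1)) (e / (2 * L2))). lra. }
  apply Hc; auto.
  - eapply Rle_lt_trans. apply Hg; auto.
    replace e with (L1 * (e / (2*L1) + e/(2*L1))) by (field; lra).
    apply Rmult_lt_compat_l; lra.
  - eapply Rle_lt_trans. apply Hh; auto.
    replace e with (L2 * (e / (2*L2) + e/(2*L2))) by (field; lra).
    apply Rmult_lt_compat_l; lra.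
Qed.

Lemma cont2_paste_s {X} op (F G : R -> R -> X) c :
  cont2 op F -> cont2 op G -> (forall t, inI t -> F c t = G c t) ->
  cont2 op (fun s t => if Rle_dec s c then F s t else G s t).
Proof.
  intros HF HG E V HV s t Hs Ht Hv.
  destruct (Rle_dec s c) as [l|l].
  - destruct (Req_dec s c) as [e0|e0].
    + subst s. assert (Hv2 : V (G c t)) by (rewrite <- E; auto).
      destruct (HF V HV c t Hs Ht Hv) as [e1 [He1 H1]].
      destruct (HG V HV c t Hs Ht Hv2) as [e2 [He2 H2]].
      exists (Rmin e1 e2); split. apply Rmin_pos; auto.
      intros s' t' Hs' Ht' D1 D2. pose proof (Rmin_l e1 e2). pose proof (Rmin_r e1 e2).
      destruct (Rle_dec s' c); [apply H1|apply H2]; auto; lra.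
    + destruct (HF V HV s t Hs Ht Hv) as [e1 [He1 H1]].
      exists (Rmin e1 (c - s)); split. apply Rmin_pos; lra.
      intros s' t' Hs' Ht' D1 D2. pose proof (Rmin_l e1 (c-s)). pose proof (Rmin_r e1 (c-s)).
      destruct (Rle_dec s' c). apply H1; auto; lra.
      exfalso. apply Rabs_def2 in D1. lra.
  - destruct (HG V HV s t Hs Ht Hv) as [e1 [He1 H1]].
    exists (Rmin e1 (s - c)); split. apply Rmin_pos; lra.
    intros s' t' Hs' Ht' D1 D2. pose proof (Rmin_l e1 (s-c)). pose proof (Rmin_r e1 (s-c)).
    destruct (Rle_dec s' c). exfalso. apply Rabs_def2 in D1. lra.
    apply H1; auto; lra.
Qed.

Lemma cont2_paste_t {X} op (F G : R -> R -> X) c :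
  cont2 op F -> cont2 op G -> (forall s, inI s -> F s c = G s c) ->
  cont2 op (fun s t => if Rle_dec t c then F s t else G s t).
Proof.
  intros HF HG E.
  apply (cont2_swap op (fun t s => if Rle_dec t c then F s t else G s t)).
  apply (cont2_paste_s op (fun t s => F s t) (fun t s => G s t)); auto;
  apply cont2_swap; auto.
Qed.

Lemma lip1_lin a b : lip1 (fun s => a * s + b).
Proof.
  exists (Rabs a + 1). split. pose proof (Rabs_pos a); lra.
  intros s s' _ _. replace (a * s' + b - (a * s + b)) with (a * (s' - s)) by ring.
  rewrite Rabs_mult. apply Rmult_le_compat_r. apply Rabs_pos. lra.
Qed.

Lemma lip1_ext f g : lip1 f -> (forall s, inI s -> f s = g s) -> lip1 g.
Proof.
  intros [L [HL Hf]] E. exists L; split; auto. intros s s' Hs Hs'.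
  rewrite <- !E by auto. auto.
Qed.

Lemma lip1_paste f g c : lip1 f -> lip1 g -> f c = g c ->
  lip1 (fun s => if Rle_dec s c then f s else g s).
Proof.
  intros [L1 [HL1 Hf]] [L2 [HL2 Hg]] E. exists (L1 + L2). split. lra.
  intros s s' Hs Hs'. unfold inI in *.
  assert (A1 : forall x y, inI x -> inI y -> Rabs (f y - f x) <= (L1 + L2) * Rabs (y - x)).
  { intros x y Hx Hy. eapply Rle_trans. apply Hf; auto.
    apply Rmult_le_compat_r. apply Rabs_pos. lra. }
  assert (A2 : forall x y, inI x -> inI y -> Rabs (g y - g x) <= (L1 + L2) * Rabs (y - x)).
  { intros x y Hx Hy. eapply Rle_trans. apply Hg; auto.
    apply Rmult_le_compat_r. apply Rabs_pos. lra. }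
  destruct (Rle_dec s c), (Rle_dec s' c).
  - apply A1; auto.
  - assert (Hc : inI c) by (unfold inI; lra).
    replace (g s' - f s) with ((g s' - g c) + (f c - f s)) by (rewrite E; ring).
    eapply Rle_trans. apply Rabs_triang.
    pose proof (A2 c s' Hc Hs'). pose proof (A1 s c Hs Hc).
    rewrite (Rabs_pos_eq (s' - s)) by lra.
    rewrite (Rabs_pos_eq (s' - c)) in * by lra. rewrite (Rabs_pos_eq (c - s)) in * by lra.
    nra.
  - assert (Hc : inI c) by (unfold inI; lra).
    replace (f s' - g s) with ((f s' - f c) + (g c - g s)) by (rewrite E; ring).
    eapply Rle_trans. apply Rabs_triang.
    pose proof (A1 c s' Hc Hs'). pose proof (A2 s c Hs Hc).
    rewrite (Rabs_left1 (s' - s)) by lra.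
    rewrite (Rabs_left1 (s' - c)) in * by lra. rewrite (Rabs_left1 (c - s)) in * by lra.
    nra.
  - apply A2; auto.
Qed.

Lemma lip2_of1 f : lip1 f -> lip2 (fun s t => f s).
Proof.
  intros [L [HL Hf]]. exists L; split; auto. intros s t s' t' Hs Ht Hs' Ht'.
  eapply Rle_trans. apply Hf; auto. apply Rmult_le_compat_l. lra.
  pose proof (Rabs_pos (t' - t)); lra.
Qed.

Lemma lip2_of1' f : lip1 f -> lip2 (fun s t => f t).
Proof.
  intros [L [HL Hf]]. exists L; split; auto. intros s t s' t' Hs Ht Hs' Ht'.
  eapply Rle_trans. apply Hf; auto. apply Rmult_le_compat_l. lra.
  pose proof (Rabs_pos (s' - s)); lra.
Qed.

Lemma lip1_id : lip1 (fun s => s).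
Proof. apply (lip1_ext (fun s => 1 * s + 0)). apply lip1_lin. intros; ring. Qed.

Lemma abs_mul01 x y : 0 <= x <= 1 -> Rabs (x * y) <= Rabs y.
Proof.
  intros H. rewrite Rabs_mult. rewrite Rabs_pos_eq by lra.
  pose proof (Rabs_pos y). nra.
Qed.

Lemma lip2_line f g : lip1 f -> lip1 g -> maps1 f -> maps1 g ->
  lip2 (fun s t => (1 - t) * f s + t * g s).
Proof.
  intros [L1 [HL1 Hf]] [L2 [HL2 Hg]] Mf Mg.
  exists (L1 + L2 + 2). split. lra.
  intros s t s' t' Hs Ht Hs' Ht'.
  pose proof (Mf s Hs). pose proof (Mf s' Hs'). pose proof (Mg s Hs). pose proof (Mg s' Hs').
  pose proof (Hf s s' Hs Hs'). pose proof (Hg s s' Hs Hs'). unfold inI in *.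
  replace ((1 - t') * f s' + t' * g s' - ((1 - t) * f s + t * g s)) with
    (((1 - t') * (f s' - f s) + t' * (g s' - g s)) + ((t - t') * f s + (t' - t) * g s)) by ring.
  eapply Rle_trans. apply Rabs_triang.
  eapply Rle_trans. apply Rplus_le_compat; apply Rabs_triang.
  pose proof (abs_mul01 (1 - t') (f s' - f s) ltac:(lra)) as A1.
  pose proof (abs_mul01 t' (g s' - g s) ltac:(lra)) as A2.
  rewrite (Rmult_comm (t - t')). rewrite (Rmult_comm (t' - t)).
  pose proof (abs_mul01 (f s) (t - t') ltac:(lra)) as A3.
  pose proof (abs_mul01 (g s) (t' - t) ltac:(lra)) as A4.
  rewrite (Rabs_minus_sym t t') in A3.
  pose proof (Rabs_pos (s' - s)). pose proof (Rabs_pos (t' - t)).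
  nra.
Qed.

Lemma lip2_snd : lip2 (fun s t => t).
Proof. apply (lip2_of1' (fun t => t)). apply lip1_id. Qed.
Lemma lip2_fst : lip2 (fun s t => s).
Proof. apply (lip2_of1 (fun t => t)). apply lip1_id. Qed.

Lemma path_cont2 {X} op (p : R -> X) : is_path op p -> cont2 op (fun s t => p s).
Proof.
  intros Hp V HV s t Hs Ht Hv. destruct (Hp V HV s Hs Hv) as [e [He Hc]].
  exists e; split; auto.
Qed.

Lemma cont2_path {X} op (F : R -> R -> X) t0 : cont2 op F -> inI t0 -> is_path op (fun s => F s t0).
Proof.
  intros HF Ht V HV s Hs Hv. destruct (HF V HV s t0 Hs Ht Hv) as [e [He Hc]].
  exists e; split; auto. intros s' Hs' D. apply Hc; auto. rewrite Rminus_diag, Rabs_R0; lra.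
Qed.

Lemma path_ext {X} op (p q : R -> X) : is_path op p -> (forall s, inI s -> p s = q s) -> is_path op q.
Proof.
  intros Hp E. apply (cont2_path op (fun s t => q s) 0).
  apply (cont2_ext op (fun s t => p s)). apply path_cont2; auto. intros; auto.
  unfold inI; lra.
Qed.

Lemma maps2_snd : maps2 (fun s t => t). Proof. intros s t _ Ht; auto. Qed.

Lemma path_comp {X} op (p : R -> X) f : is_path op p -> lip1 f -> maps1 f -> is_path op (fun s => p (f s)).
Proof.
  intros Hp Lf Mf.
  apply (cont2_path op (fun s t => p (f s)) 0); [|unfold inI; lra].
  apply (cont2_comp op (fun u v => p u) (fun s t => f s) (fun s t => t)).
  apply path_cont2; auto. apply lip2_of1; auto. apply lip2_snd.
  intros s t Hs _; auto. apply maps2_snd.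
Qed.

Lemma path_const {X} op (x : X) : is_topology op -> is_path op (pconst x).
Proof.
  intros _ V HV t Ht Hv. exists 1; split. lra. intros; auto.
Qed.

Definition cl1 (s : R) : R := if Rle_dec s (1/2) then 2 * s else 1.
Definition cl2 (s : R) : R := if Rle_dec s (1/2) then 0 else 2 * s - 1.

Lemma lip1_cl1 : lip1 cl1.
Proof.
  unfold cl1. apply (lip1_paste (fun s => 2 * s) (fun s => 1)).
  apply (lip1_ext (fun s => 2 * s + 0)). apply lip1_lin. intros; ring.
  apply (lip1_ext (fun s => 0 * s + 1)). apply lip1_lin. intros; ring. lra.
Qed.
Lemma lip1_cl2 : lip1 cl2.
Proof.
  unfold cl2. apply (lip1_paste (fun s => 0) (fun s => 2 * s - 1)).
  apply (lip1_ext (fun s => 0 * s + 0)). apply lip1_lin. intros; ring.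
  apply (lip1_ext (fun s => 2 * s + -1)). apply lip1_lin. intros; ring. lra.
Qed.
Lemma maps1_cl1 : maps1 cl1.
Proof. intros s Hs; unfold cl1, inI in *; destruct Rle_dec; lra. Qed.
Lemma maps1_cl2 : maps1 cl2.
Proof. intros s Hs; unfold cl2, inI in *; destruct Rle_dec; lra. Qed.

Lemma cont2_concat {X} op (F G : R -> R -> X) :
  cont2 op F -> cont2 op G -> (forall t, inI t -> F 1 t = G 0 t) ->
  cont2 op (fun s t => if Rle_dec s (1/2) then F (2 * s) t else G (2 * s - 1) t).
Proof.
  intros HF HG E.
  apply (cont2_ext op (fun s t => if Rle_dec s (1/2) then F (cl1 s) t else G (cl2 s) t)).
  apply cont2_paste_s.
  - apply (cont2_comp op F (fun s t => cl1 s) (fun s t => t)); auto.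
    apply lip2_of1, lip1_cl1. apply lip2_snd. intros s t Hs _; apply maps1_cl1; auto. apply maps2_snd.
  - apply (cont2_comp op G (fun s t => cl2 s) (fun s t => t)); auto.
    apply lip2_of1, lip1_cl2. apply lip2_snd. intros s t Hs _; apply maps1_cl2; auto. apply maps2_snd.
  - intros t Ht. unfold cl1, cl2. destruct Rle_dec; try lra.
    replace (2 * (1/2)) with 1 by lra. auto.
  - intros s t _ _. unfold cl1, cl2. destruct Rle_dec; auto.
Qed.

Lemma path_concat {X} op (p q : R -> X) : is_path op p -> is_path op q -> p 1 = q 0 ->
  is_path op (pconcat p q).
Proof.
  intros Hp Hq E. apply (cont2_path op (fun s t => pconcat p q s) 0); [|unfold inI; lra].
  unfold pconcat. apply (cont2_concat op (fun s t => p s) (fun s t => q s));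
   try apply path_cont2; auto.
Qed.

Lemma path_prev {X} op (p : R -> X) : is_path op p -> is_path op (prev p).
Proof.
  intros Hp. unfold prev. apply (path_comp op p (fun s => 1 - s)); auto.
  apply (lip1_ext (fun s => -1 * s + 1)). apply lip1_lin. intros; ring.
  intros s Hs; unfold inI in *; lra.
Qed.

Lemma pconcat_0 {X} (p q : R -> X) : pconcat p q 0 = p 0.
Proof. unfold pconcat. destruct Rle_dec; [|lra]. f_equal; ring. Qed.
Lemma pconcat_1 {X} (p q : R -> X) : pconcat p q 1 = q 1.
Proof. unfold pconcat. destruct Rle_dec; [lra|]. f_equal; ring. Qed.
Lemma prev_0 {X} (p : R -> X) : prev p 0 = p 1.
Proof. unfold prev. f_equal; ring. Qed.
Lemma prev_1 {X} (p : R -> X) : prev p 1 = p 0.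
Proof. unfold prev. f_equal; ring. Qed.

Notation hom op p q := (path_homotopic op p q).

Lemma hom_props {X} op (p q : R -> X) : hom op p q ->
  is_path op p /\ is_path op q /\ p 0 = q 0 /\ p 1 = q 1.
Proof.
  intros [F [HF [H1 H2]]].
  assert (I0 : inI 0) by (unfold inI; lra). assert (I1 : inI 1) by (unfold inI; lra).
  split; [|split; [|split]].
  - apply (path_ext op (fun s => F s 0)). apply cont2_path; auto. intros; apply H1; auto.
  - apply (path_ext op (fun s => F s 1)). apply cont2_path; auto. intros; apply H1; auto.
  - destruct (H1 0 I0). destruct (H2 1 I1). congruence.
  - destruct (H1 1 I1). destruct (H2 1 I1). congruence.
Qed.

Lemma hom_refl {X} op (p : R -> X) : is_path op p -> hom op p p.
Proof.
  intros Hp. exists (fun s t => p s). split. apply path_cont2; auto.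
  split; intros; auto.
Qed.

Lemma hom_ext_l {X} op (p p' q : R -> X) : hom op p q -> (forall s, inI s -> p' s = p s) -> hom op p' q.
Proof.
  intros [F [HF [H1 H2]]] E. exists F. split; auto.
  assert (I0 : inI 0) by (unfold inI; lra). assert (I1 : inI 1) by (unfold inI; lra).
  split; intros.
  - rewrite E by auto. auto.
  - rewrite !E by auto. auto.
Qed.

Lemma hom_ext_r {X} op (p q q' : R -> X) : hom op p q -> (forall s, inI s -> q' s = q s) -> hom op p q'.
Proof.
  intros [F [HF [H1 H2]]] E. exists F. split; auto.
  split; intros; auto. rewrite E by auto. auto.
Qed.

Lemma hom_ext {X} op (p q : R -> X) : is_path op p -> (forall s, inI s -> p s = q s) -> hom op p q.
Proof. intros Hp E. apply (hom_ext_r op p p q). apply hom_refl; auto. intros; symmetry; auto. Qed.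

Lemma hom_sym {X} op (p q : R -> X) : hom op p q -> hom op q p.
Proof.
  intros Hh. pose proof (hom_props op p q Hh) as [_ [_ [E0 E1]]].
  destruct Hh as [F [HF [H1 H2]]].
  exists (fun s t => F s (1 - t)). split.
  - apply (cont2_comp op F (fun s t => s) (fun s t => 1 - t)); auto. apply lip2_fst.
    apply (lip2_of1' (fun t => 1 - t)). apply (lip1_ext (fun t => -1 * t + 1)). apply lip1_lin. intros; ring.
    intros s t Hs _; auto. intros s t _ Ht; unfold inI in *; lra.
  - split; intros s Hs.
    + rewrite Rminus_0_r. replace (1 - 1) with 0 by ring. destruct (H1 s Hs); split; auto.
    + assert (inI (1 - s)) by (unfold inI in *; lra). destruct (H2 _ H). split; congruence.
Qed.

Lemma hom_trans {X} op (p q r : R -> X) : hom op p q -> hom op q r -> hom op p r.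
Proof.
  intros Hpq Hqr. pose proof (hom_props op p q Hpq) as [_ [_ [E0 E1]]].
  destruct Hpq as [F [HF [H1 H2]]]. destruct Hqr as [G [HG [G1 G2]]].
  exists (fun s t => if Rle_dec t (1/2) then F s (2 * t) else G s (2 * t - 1)).
  split.
  - apply (cont2_swap op (fun t s => if Rle_dec t (1/2) then F s (2 * t) else G s (2 * t - 1))).
    apply (cont2_concat op (fun t s => F s t) (fun t s => G s t)); try apply cont2_swap; auto.
    intros s Hs. destruct (H1 s Hs), (G1 s Hs). congruence.
  - split; intros s Hs.
    + destruct (Rle_dec 0 (1/2)); [|lra]. destruct (Rle_dec 1 (1/2)); [lra|].
      rewrite Rmult_0_r. replace (2 * 1 - 1) with 1 by ring.
      destruct (H1 s Hs), (G1 s Hs); split; auto.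
    + unfold inI in Hs. destruct Rle_dec.
      * apply H2. unfold inI; lra.
      * assert (inI (2 * s - 1)) by (unfold inI; lra). destruct (G2 _ H). split; congruence.
Qed.

Lemma hom_concat {X} op (p p' q q' : R -> X) : hom op p p' -> hom op q q' -> p 1 = q 0 ->
  hom op (pconcat p q) (pconcat p' q').
Proof.
  intros Hp Hq E.
  pose proof (hom_props op p p' Hp) as [_ [_ [E0 E1]]].
  pose proof (hom_props op q q' Hq) as [_ [_ [F0 F1]]].
  destruct Hp as [F [HF [H1 H2]]]. destruct Hq as [G [HG [G1 G2]]].
  exists (fun s t => if Rle_dec s (1/2) then F (2 * s) t else G (2 * s - 1) t).
  split.
  - apply cont2_concat; auto. intros t Ht. destruct (H2 t Ht), (G2 t Ht). congruence.
  - unfold pconcat. split; intros s Hs.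
    + unfold inI in Hs. destruct Rle_dec; [apply H1|apply G1]; unfold inI; lra.
    + destruct (Rle_dec 0 (1/2)); [|lra]. destruct (Rle_dec 1 (1/2)); [lra|].
      rewrite Rmult_0_r. replace (2 * 1 - 1) with 1 by ring.
      destruct (H2 s Hs), (G2 s Hs); split; auto.
Qed.

Lemma hom_prev {X} op (p q : R -> X) : hom op p q -> hom op (prev p) (prev q).
Proof.
  intros Hh. destruct Hh as [F [HF [H1 H2]]].
  exists (fun s t => F (1 - s) t). split.
  - apply (cont2_comp op F (fun s t => 1 - s) (fun s t => t)); auto.
    apply (lip2_of1 (fun t => 1 - t)). apply (lip1_ext (fun t => -1 * t + 1)). apply lip1_lin. intros; ring.
    apply lip2_snd. intros s t Hs _; unfold inI in *; lra. apply maps2_snd.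
  - unfold prev. split; intros s Hs.
    + apply H1. unfold inI in *; lra.
    + rewrite Rminus_0_r. replace (1 - 1) with 0 by ring. destruct (H2 s Hs); split; auto.
Qed.

Lemma reparam {X} op (p : R -> X) f g : is_path op p -> lip1 f -> lip1 g -> maps1 f -> maps1 g ->
  f 0 = g 0 -> f 1 = g 1 -> hom op (fun s => p (f s)) (fun s => p (g s)).
Proof.
  intros Hp Lf Lg Mf Mg E0 E1.
  exists (fun s t => p ((1 - t) * f s + t * g s)). split.
  - apply (cont2_comp op (fun u v => p u) (fun s t => (1 - t) * f s + t * g s) (fun s t => t)).
    apply path_cont2; auto. apply lip2_line; auto. apply lip2_snd.
    intros s t Hs Ht. pose proof (Mf s Hs). pose proof (Mg s Hs). unfold inI in *. nra.
    apply maps2_snd.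
  - split; intros s Hs; split; f_equal.
    all: try rewrite E0; try rewrite E1; ring.
Qed.

Lemma reparam_gen {X} op (p P Q : R -> X) f g : is_path op p -> lip1 f -> lip1 g -> maps1 f -> maps1 g ->
  f 0 = g 0 -> f 1 = g 1 -> (forall s, inI s -> P s = p (f s)) -> (forall s, inI s -> Q s = p (g s)) ->
  hom op P Q.
Proof.
  intros. eapply hom_ext_r. eapply hom_ext_l. apply (reparam op p f g); auto. auto. auto.
Qed.

Ltac dest_rle :=
  repeat (match goal with
          | |- context [Rle_dec ?a ?b] => is_var a; destruct (Rle_dec a b)
          end);
  repeat (match goal with
          | |- context [Rle_dec ?a ?b] => destruct (Rle_dec a b)
          end).

Ltac pw := unfold pconcat, prev, pconst; dest_rle; try (exfalso; lra); try reflexivity;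
  try (f_equal; lra).

Lemma lip1_const c : lip1 (fun _ => c).
Proof. apply (lip1_ext (fun s => 0 * s + c)). apply lip1_lin. intros; ring. Qed.

Definition phiA (s : R) : R := if Rle_dec s (1/4) then 2 * s else if Rle_dec s (1/2) then s + 1/4 else (s + 1) / 2.

Lemma lip1_phiA : lip1 phiA.
Proof.
  unfold phiA. apply (lip1_paste (fun s => 2 * s) (fun s => if Rle_dec s (1/2) then s + 1/4 else (s + 1) / 2)).
  apply (lip1_ext (fun s => 2 * s + 0)). apply lip1_lin. intros; ring.
  apply lip1_paste. apply (lip1_ext (fun s => 1 * s + 1/4)). apply lip1_lin. intros; ring.
  apply (lip1_ext (fun s => (1/2) * s + 1/2)). apply lip1_lin. intros; field. field.
  destruct Rle_dec; lra.
Qed.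
Lemma maps1_phiA : maps1 phiA.
Proof. intros s Hs; unfold phiA, inI in *; dest_rle; lra. Qed.
Lemma maps1_id : maps1 (fun s => s). Proof. intros s Hs; auto. Qed.

Ltac pth := repeat first [ apply path_concat | apply path_prev | apply path_const ];
   try assumption;
   repeat first [ rewrite pconcat_0 | rewrite pconcat_1 | rewrite prev_0 | rewrite prev_1 ];
   unfold pconst; auto.

Lemma hom_assoc {X} op (p q r : R -> X) : is_topology op -> is_path op p -> is_path op q -> is_path op r ->
  p 1 = q 0 -> q 1 = r 0 -> hom op (pconcat (pconcat p q) r) (pconcat p (pconcat q r)).
Proof.
  intros T Hp Hq Hr E1 E2.
  apply (reparam_gen op (pconcat p (pconcat q r)) _ _ phiA (fun s => s)); auto.
  pth. pth. apply lip1_phiA. apply lip1_id. apply maps1_phiA. apply maps1_id.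
  unfold phiA; dest_rle; lra. unfold phiA; dest_rle; lra.
  intros s Hs. unfold phiA. pw.
Qed.

Lemma lip1_tent : lip1 (fun s => if Rle_dec s (1/2) then 2 * s else 2 - 2 * s).
Proof.
  apply lip1_paste. apply (lip1_ext (fun s => 2 * s + 0)). apply lip1_lin. intros; ring.
  apply (lip1_ext (fun s => -2 * s + 2)). apply lip1_lin. intros; ring. lra.
Qed.
Lemma lip1_vee : lip1 (fun s => if Rle_dec s (1/2) then 1 - 2 * s else 2 * s - 1).
Proof.
  apply lip1_paste. apply (lip1_ext (fun s => -2 * s + 1)). apply lip1_lin. intros; ring.
  apply (lip1_ext (fun s => 2 * s + -1)). apply lip1_lin. intros; ring. lra.
Qed.

Lemma hom_inv_r {X} op (p : R -> X) : is_topology op -> is_path op p ->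
  hom op (pconcat p (prev p)) (pconst (p 0)).
Proof.
  intros T Hp.
  apply (reparam_gen op p _ _ (fun s => if Rle_dec s (1/2) then 2 * s else 2 - 2 * s) (fun _ => 0)); auto.
  all: first [ apply lip1_tent | apply lip1_const | solve [intros s Hs; unfold inI in *; dest_rle; lra]
   | solve [dest_rle; lra] | solve [intros s Hs; pw] | idtac ].
Qed.

Lemma hom_inv_l {X} op (p : R -> X) : is_topology op -> is_path op p ->
  hom op (pconcat (prev p) p) (pconst (p 1)).
Proof.
  intros T Hp.
  apply (reparam_gen op p _ _ (fun s => if Rle_dec s (1/2) then 1 - 2 * s else 2 * s - 1) (fun _ => 1)); auto.
  all: first [ apply lip1_vee | apply lip1_const | solve [intros s Hs; unfold inI in *; dest_rle; lra]
   | solve [dest_rle; lra] | solve [intros s Hs; pw] | idtac ].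
Qed.

Lemma hom_unit_l {X} op (p : R -> X) : is_topology op -> is_path op p ->
  hom op (pconcat (pconst (p 0)) p) p.
Proof.
  intros T Hp. apply (reparam_gen op p _ _ cl2 (fun s => s)); auto.
  apply lip1_cl2. apply lip1_id. apply maps1_cl2. apply maps1_id.
  all: try (unfold cl2; dest_rle; lra).
  intros s Hs. unfold cl2. pw.
Qed.

Lemma hom_unit_r {X} op (p : R -> X) : is_topology op -> is_path op p ->
  hom op (pconcat p (pconst (p 1))) p.
Proof.
  intros T Hp. apply (reparam_gen op p _ _ cl1 (fun s => s)); auto.
  apply lip1_cl1. apply lip1_id. apply maps1_cl1. apply maps1_id.
  all: try (unfold cl1; dest_rle; lra).
  intros s Hs. unfold cl1. pw.
Qed.

Lemma hom_prev_concat {X} op (p q : R -> X) : is_topology op -> is_path op p -> is_path op q ->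
  p 1 = q 0 -> hom op (prev (pconcat p q)) (pconcat (prev q) (prev p)).
Proof.
  intros T Hp Hq E. apply hom_ext. pth.
  intros s Hs. pw. replace (1 - (2 * s - 1)) with (2 * (1 - s)) by ring.
  replace (2 * (1 - s)) with 1 by lra. replace (1 - 2 * s) with 0 by lra. auto.
Qed.

Lemma hom_prev_prev {X} op (p : R -> X) : is_path op p -> hom op (prev (prev p)) p.
Proof.
  intros Hp. apply hom_ext. apply path_prev, path_prev; auto. intros s Hs. pw.
Qed.

Ltac ends := repeat first [ rewrite pconcat_0 | rewrite pconcat_1 | rewrite prev_0 | rewrite prev_1 ];
   unfold pconst; auto; try congruence.
Ltac pth2 := repeat first [ apply path_concat | apply path_prev | apply path_const ];
   try assumption; ends.

Lemma hrefl {X} op (p : R -> X) : is_path op p -> hom op p p. Proof. apply hom_refl. Qed.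

Ltac hmid m := apply (hom_trans _ _ m).

Lemma hom_cr {X} op (p q q' : R -> X) : is_path op p -> hom op q q' -> p 1 = q 0 ->
  hom op (pconcat p q) (pconcat p q').
Proof. intros. apply hom_concat; auto. apply hom_refl; auto. Qed.
Lemma hom_cl {X} op (p p' q : R -> X) : is_path op q -> hom op p p' -> p 1 = q 0 ->
  hom op (pconcat p q) (pconcat p' q).
Proof. intros. apply hom_concat; auto. apply hom_refl; auto. Qed.

Lemma C3 {X} op (a h : R -> X) : is_topology op -> is_path op a -> is_path op h ->
  h 0 = a 0 -> h 1 = a 0 ->
  hom op (pconcat (pconcat a (pconcat (pconcat (prev a) h) a)) (prev a)) h.
Proof.
  intros T Ha Hh E0 E1.
  hmid (pconcat a (pconcat (pconcat (prev a) h) (pconcat a (prev a)))).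
  { hmid (pconcat a (pconcat (pconcat (pconcat (prev a) h) a) (prev a))).
    apply hom_assoc; auto; pth2. pth2.
    apply hom_cr; [pth2| |pth2]. apply hom_assoc; auto; pth2. }
  hmid (pconcat a (pconcat (prev a) h)).
  { apply hom_cr; [pth2| |pth2].
    hmid (pconcat (pconcat (prev a) h) (pconst (a 0))).
    apply hom_cr; [pth2| |pth2]. apply hom_inv_r; auto.
    replace (a 0) with (pconcat (prev a) h 1) by (ends).
    apply hom_unit_r; auto; pth2. }
  hmid (pconcat (pconcat a (prev a)) h).
  { apply hom_sym. apply hom_assoc; auto; pth2. }
  hmid (pconcat (pconst (a 0)) h).
  { apply hom_cl; [pth2| |pth2]. apply hom_inv_r; auto. }
  rewrite <- E0. apply hom_unit_l; auto.
Qed.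

Lemma C4 {X} op (a b : R -> X) : is_topology op -> is_path op a -> is_path op b ->
  b 0 = a 1 -> b 1 = a 1 ->
  hom op (pconcat (pconcat (prev a) (pconcat a (pconcat b (prev a)))) a) b.
Proof.
  intros T Ha Hb E0 E1.
  hmid (pconcat (prev a) (pconcat (pconcat a (pconcat b (prev a))) a)).
  { apply hom_assoc; auto; pth2. }
  hmid (pconcat (prev a) (pconcat a b)).
  { apply hom_cr; [pth2| |pth2].
    hmid (pconcat a (pconcat (pconcat b (prev a)) a)). apply hom_assoc; auto; pth2.
    apply hom_cr; [pth2| |pth2].
    hmid (pconcat b (pconcat (prev a) a)). apply hom_assoc; auto; pth2.
    hmid (pconcat b (pconst (a 1))). apply hom_cr; [pth2| |pth2]. apply hom_inv_l; auto.
    rewrite <- E1. apply hom_unit_r; auto. }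
  hmid (pconcat (pconcat (prev a) a) b).
  { apply hom_sym. apply hom_assoc; auto; pth2. }
  hmid (pconcat (pconst (a 1)) b).
  { apply hom_cl; [pth2| |pth2]. apply hom_inv_l; auto. }
  rewrite <- E0. apply hom_unit_l; auto.
Qed.

Lemma C1 {X} op (a b c : R -> X) : is_topology op -> is_path op a -> is_path op b -> is_path op c ->
  a 1 = b 1 -> b 1 = c 0 ->
  hom op (pconcat (pconcat a (prev b)) (pconcat b c)) (pconcat a c).
Proof.
  intros T Ha Hb Hc E1 E2.
  hmid (pconcat a (pconcat (prev b) (pconcat b c))). apply hom_assoc; auto; pth2.
  apply hom_cr; [pth2| |pth2].
  hmid (pconcat (pconcat (prev b) b) c). apply hom_sym, hom_assoc; auto; pth2.
  hmid (pconcat (pconst (b 1)) c). apply hom_cl; [pth2| |pth2]. apply hom_inv_l; auto.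
  rewrite E2. apply hom_unit_l; auto.
Qed.

Lemma C2 {X} op (a b c : R -> X) : is_topology op -> is_path op a -> is_path op b -> is_path op c ->
  a 1 = b 0 -> c 0 = b 0 ->
  hom op (pconcat (pconcat a b) (pconcat (prev b) c)) (pconcat a c).
Proof.
  intros T Ha Hb Hc E1 E2.
  hmid (pconcat a (pconcat b (pconcat (prev b) c))). apply hom_assoc; auto; pth2.
  apply hom_cr; [pth2| |pth2].
  hmid (pconcat (pconcat b (prev b)) c). apply hom_sym, hom_assoc; auto; pth2.
  hmid (pconcat (pconst (b 0)) c). apply hom_cl; [pth2| |pth2]. apply hom_inv_r; auto.
  rewrite <- E2. apply hom_unit_l; auto.
Qed.

Definition sim {X} (H : (R -> X) -> Prop) (p q : R -> X) : Prop := H (pconcat p (prev q)).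

Lemma H_hom {X} op x0 (H : (R -> X) -> Prop) p q : is_pi1_subgroup op x0 H -> H p -> hom op p q -> H q.
Proof. intros [_ [A _]] Hp Hh. eauto. Qed.

Lemma sim_hom {X} op x0 (H : (R -> X) -> Prop) p q : is_topology op -> is_pi1_subgroup op x0 H ->
  is_path op p -> p 0 = x0 -> hom op p q -> sim H p q.
Proof.
  intros T HS Hp E Hh. pose proof (hom_props op p q Hh) as [_ [Hq [F0 F1]]].
  unfold sim. apply (H_hom op x0 H (pconst x0)); auto. apply HS.
  apply hom_sym. hmid (pconcat p (prev p)).
  apply hom_cr; auto. apply hom_prev, hom_sym; auto. ends.
  rewrite <- E. apply hom_inv_r; auto.
Qed.

Lemma sim_sym {X} op x0 (H : (R -> X) -> Prop) p q : is_topology op -> is_pi1_subgroup op x0 H ->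
  is_path op p -> is_path op q -> p 1 = q 1 -> sim H p q -> sim H q p.
Proof.
  intros T HS Hp Hq E Hs. unfold sim in *.
  assert (H (prev (pconcat p (prev q)))) by (apply HS; auto).
  apply (H_hom op x0 H _ _ HS H0).
  hmid (pconcat (prev (prev q)) (prev p)). apply hom_prev_concat; auto; pth2.
  apply hom_cl; [pth2| |pth2]. apply hom_prev_prev; auto.
Qed.

Lemma sim_trans {X} op x0 (H : (R -> X) -> Prop) p q r : is_topology op -> is_pi1_subgroup op x0 H ->
  is_path op p -> is_path op q -> is_path op r -> p 1 = q 1 -> q 1 = r 1 ->
  sim H p q -> sim H q r -> sim H p r.
Proof.
  intros T HS Hp Hq Hr E1 E2 S1 S2. unfold sim in *.
  assert (H (pconcat (pconcat p (prev q)) (pconcat q (prev r)))) by (apply HS; auto).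
  apply (H_hom op x0 H _ _ HS H0). apply C1; auto; pth2.
Qed.

Lemma sim_rmul {X} op x0 (H : (R -> X) -> Prop) p q r : is_topology op -> is_pi1_subgroup op x0 H ->
  is_path op p -> is_path op q -> is_path op r -> p 1 = r 0 -> q 1 = r 0 ->
  sim H p q -> sim H (pconcat p r) (pconcat q r).
Proof.
  intros T HS Hp Hq Hr E1 E2 S1. unfold sim in *.
  apply (H_hom op x0 H _ _ HS S1). apply hom_sym.
  hmid (pconcat (pconcat p r) (pconcat (prev r) (prev q))).
  apply hom_cr; [pth2| |pth2]. apply hom_prev_concat; auto.
  apply C2; auto; pth2.
Qed.

Lemma sim_homl {X} op x0 (H : (R -> X) -> Prop) p p' q : is_topology op -> is_pi1_subgroup op x0 H ->
  is_path op p -> is_path op q -> p 0 = x0 -> p 1 = q 1 -> hom op p p' -> sim H p q -> sim H p' q.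
Proof.
  intros T HS Hp Hq E0 E1 Hh S. pose proof (hom_props op p p' Hh) as [_ [Hp' [F0 F1]]].
  apply (sim_trans op x0 H p' p q); auto; try congruence.
  apply (sim_hom op x0); auto; try congruence. apply hom_sym; auto.
Qed.

Lemma sim_homr {X} op x0 (H : (R -> X) -> Prop) p q q' : is_topology op -> is_pi1_subgroup op x0 H ->
  is_path op p -> is_path op q -> q 0 = x0 -> p 1 = q 1 -> hom op q q' -> sim H p q -> sim H p q'.
Proof.
  intros T HS Hp Hq E0 E1 Hh S. pose proof (hom_props op q q' Hh) as [_ [Hq' [F0 F1]]].
  apply (sim_trans op x0 H p q q'); auto; try congruence.
  apply (sim_hom op x0); auto.
Qed.

Lemma op_inter {X} (op : (X -> Prop) -> Prop) U V : is_topology op -> op U -> op V -> op (fun x => U x /\ V x).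
Proof. intros [_ [A _]]; auto. Qed.
Lemma op_full {X} (op : (X -> Prop) -> Prop) : is_topology op -> op (fun _ => True).
Proof. intros [A _]; auto. Qed.

Definition goodKV {X} (a : R -> X) (d : R) (U : X -> Prop) (KV : (R -> Prop) * (X -> Prop)) : Prop :=
  forall t, fst KV t -> Rabs (t - 1/2) < d -> forall x, (U x \/ exists s, inI s /\ 1 - 2 * d <= s /\ x = a s) -> snd KV x.

Lemma goodKV_mono {X} (a : R -> X) d d' U U' KV : d' <= d -> (forall x, U' x -> U x) ->
  goodKV a d U KV -> goodKV a d' U' KV.
Proof.
  intros Hd HU G t Ht Htd x Hx. apply (G t Ht). lra.
  destruct Hx as [Hx|[s [Hs [Hs2 ->]]]]. left; auto. right; exists s; split; [auto|split; [lra|reflexivity]].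
Qed.

Lemma list_good {X} op (a : R -> X) (l : list ((R -> Prop) * (X -> Prop))) : is_topology op ->
  is_path op a ->
  (forall KV, In KV l -> subbasic op KV) ->
  (forall KV, In KV l -> in_subbasic KV (pconcat a (prev a))) ->
  exists d U, d > 0 /\ op U /\ U (a 1) /\ forall KV, In KV l -> goodKV a d U KV.
Proof.
  intros T Ha. induction l as [|KV l IH]; intros Hsb Hin.
  - exists 1, (fun _ => True). split. lra. split. apply op_full; auto. split; auto.
    intros KV []. 
  - destruct IH as [d1 [U1 [Hd1 [HU1 [Hy1 G1]]]]].
    intros; apply Hsb; simpl; auto. intros; apply Hin; simpl; auto.
    destruct (Hsb KV (or_introl eq_refl)) as [Kc [KI Vo]].
    assert (Hv : forall t, fst KV t -> snd KV (pconcat a (prev a) t)) by (apply Hin; simpl; auto).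
    assert (exists d2 U2, d2 > 0 /\ op U2 /\ U2 (a 1) /\ goodKV a d2 U2 KV) as [d2 [U2 [Hd2 [HU2 [Hy2 G2]]]]].
    { destruct (classic (fst KV (1/2))) as [Hk|Hk].
      - assert (V1 : snd KV (a 1)).
        { pose proof (Hv _ Hk) as W. unfold pconcat in W. destruct Rle_dec; [|lra].
          replace (2 * (1/2)) with 1 in W by field. auto. }
        destruct (Ha (snd KV) Vo 1 ltac:(unfold inI; lra) V1) as [e [He Hc]].
        exists (e / 4), (snd KV). split. lra. split; auto. split; auto.
        intros t Ht Htd x [Hx|[s [Hs [Hs2 ->]]]]. auto.
        apply Hc; auto. unfold inI in Hs. rewrite Rabs_left1 by lra. lra.
      - pose proof (compact_P2 _ Kc) as Cl. destruct (Cl (1/2) Hk) as [del Hdel].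
        exists del, (fun _ => True). split. apply cond_pos. split. apply op_full; auto. split; auto.
        intros t Ht Htd. exfalso. apply (Hdel t); auto. }
    exists (Rmin d1 d2), (fun x => U1 x /\ U2 x). split. apply Rmin_pos; auto.
    split. apply op_inter; auto. split. auto.
    intros KV' [<-|Hl].
    + eapply goodKV_mono; [apply Rmin_r| |apply G2]. tauto.
    + eapply goodKV_mono; [apply Rmin_l| |apply G1; auto]. tauto.
Qed.

Definition phiB (d0 : R) (s : R) : R :=
  if Rle_dec s (1/2) then s else if Rle_dec s (1/2 + d0) then 1/2 + (1/(4*d0) + 1/2) * (s - 1/2) else (1 + s)/2.

Lemma phiB_props d0 : 0 < d0 <= 1/4 -> lip1 (phiB d0) /\ maps1 (phiB d0) /\ phiB d0 0 = 0 /\ phiB d0 1 = 1.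
Proof.
  intros Hd. assert (Hk : (1/(4*d0) + 1/2) * d0 = 1/4 + d0/2) by (field; lra).
  assert (Hk0 : 0 < 1/(4*d0) + 1/2). { assert (0 < 1/(4*d0)) by (apply Rdiv_lt_0_compat; lra). lra. }
  split; [|split; [|split]].
  - unfold phiB. apply lip1_paste. apply lip1_id. apply lip1_paste.
    apply (lip1_ext (fun s => (1/(4*d0) + 1/2) * s + (1/2 - (1/(4*d0) + 1/2) * (1/2)))). apply lip1_lin. intros; ring.
    apply (lip1_ext (fun s => (1/2) * s + 1/2)). apply lip1_lin. intros; field.
    replace (1/2 + d0 - 1/2) with d0 by ring. rewrite Hk. field.
    destruct Rle_dec; [|lra]. ring.
  - intros s Hs. unfold phiB, inI in *. dest_rle; try lra.
    assert (0 <= (1/(4*d0) + 1/2) * (s - 1/2) <= (1/(4*d0) + 1/2) * d0).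
    { split. apply Rmult_le_pos; lra. apply Rmult_le_compat_l; lra. }
    lra.
  - unfold phiB. dest_rle; lra.
  - unfold phiB. dest_rle; lra.
Qed.

Lemma open_to_semi {X} op x0 (H : (R -> X) -> Prop) : is_topology op -> is_pi1_subgroup op x0 H ->
  open_in_pi1_qtop op x0 H -> semilocally_path_H_connected op x0 H.
Proof.
  intros T HS Hop a Ha Ea.
  assert (Hl : H (pconcat a (prev a))).
  { apply (H_hom op x0 H (pconst x0)); auto. apply HS. apply hom_sym. rewrite <- Ea. apply hom_inv_r; auto. }
  destruct (Hop _ Hl) as [l [Lsb [Lin Lall]]].
  destruct (list_good op a l T Ha Lsb Lin) as [d [U [Hd [HU [Hy G]]]]].
  exists U. split; auto. split; auto.
  intros b [Hb Hbu] Eb0 Eb1.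
  pose (d0 := Rmin (d/2) (1/4)).
  assert (Hd0 : 0 < d0 <= 1/4 /\ d0 <= d/2).
  { unfold d0. pose proof (Rmin_l (d/2) (1/4)). pose proof (Rmin_r (d/2) (1/4)).
    split; [split|]; auto. apply Rmin_pos; lra. }
  destruct (phiB_props d0 (proj1 Hd0)) as [Lp [Mp [P0 P1]]].
  pose (M := pconcat a (pconcat b (prev a))).
  assert (HM : is_path op M) by (unfold M; pth2).
  assert (HMl : H (fun s => M (phiB d0 s))).
  { apply Lall.
    - split. apply path_comp; auto. rewrite P0, P1. unfold M. ends.
    - intros KV HKV t Kt. destruct (Lsb KV HKV) as [_ [KI _]]. pose proof (KI t Kt) as It.
      pose proof (Lin KV HKV t Kt) as Hv.
      assert (Hk : (1/(4*d0) + 1/2) * d0 = 1/4 + d0/2) by (field; lra).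
      assert (Hk0 : 0 < 1/(4*d0) + 1/2). { assert (0 < 1/(4*d0)) by (apply Rdiv_lt_0_compat; lra). lra. }
      unfold phiB, M. unfold inI in It. destruct (Rle_dec t (1/2)).
      + unfold pconcat in *. destruct Rle_dec; [auto|lra].
      + destruct (Rle_dec t (1/2 + d0)).
        * assert (0 < (1/(4*d0) + 1/2) * (t - 1/2) <= (1/(4*d0) + 1/2) * d0).
          { split. apply Rmult_lt_0_compat; lra. apply Rmult_le_compat_l; lra. }
          apply (G KV HKV t Kt). rewrite Rabs_pos_eq by lra. lra.
          unfold pconcat. destruct Rle_dec; [lra|]. destruct Rle_dec.
          -- left. apply Hbu. unfold inI; lra.
          -- right. unfold prev. eexists; split; [|split; [|reflexivity]]; unfold inI; lra.
        * unfold pconcat in *. destruct (Rle_dec ((1+t)/2) (1/2)); [lra|].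
          destruct (Rle_dec (2 * ((1 + t) / 2) - 1) (1/2)); [lra|].
          revert Hv. destruct (Rle_dec t (1/2)); [lra|]. intro Hv. unfold prev in *.
          replace (1 - (2 * (2 * ((1 + t) / 2) - 1) - 1)) with (1 - (2 * t - 1)) by field. auto. }
  assert (HMH : H M).
  { apply (H_hom op x0 H _ _ HS HMl). apply (reparam op M (phiB d0) (fun s => s)); auto.
    apply lip1_id. apply maps1_id. }
  exists M. split; auto. apply hom_sym. unfold M. apply C4; auto.
Qed.

Definition sub {X} (p : R -> X) (a b : R) : R -> X := fun s => p (a + (b - a) * s).

Lemma conv_I a b s : inI a -> inI b -> inI s -> inI (a + (b - a) * s).
Proof. unfold inI; intros; nra. Qed.

Lemma conv_between a b s : inI s -> Rmin a b <= a + (b - a) * s <= Rmax a b.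
Proof.
  unfold inI; intros. unfold Rmin, Rmax; destruct Rle_dec; nra.
Qed.

Lemma path_sub {X} op (p : R -> X) a b : is_path op p -> inI a -> inI b -> is_path op (sub p a b).
Proof.
  intros. unfold sub. apply (path_comp op p (fun s => a + (b - a) * s)); auto.
  apply (lip1_ext (fun s => (b - a) * s + a)). apply lip1_lin. intros; ring.
  intros s Hs; apply conv_I; auto.
Qed.

Lemma sub_0 {X} (p : R -> X) a b : sub p a b 0 = p a.
Proof. unfold sub. f_equal; ring. Qed.
Lemma sub_1 {X} (p : R -> X) a b : sub p a b 1 = p b.
Proof. unfold sub. f_equal; ring. Qed.

Lemma hom_sub_concat {X} op (p : R -> X) a b c : is_path op p -> inI a -> inI b -> inI c ->
  hom op (pconcat (sub p a b) (sub p b c)) (sub p a c).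
Proof.
  intros Hp Ia Ib Ic.
  apply (reparam_gen op p _ _ (fun s => if Rle_dec s (1/2) then a + (b - a) * (2 * s) else b + (c - b) * (2 * s - 1))
     (fun s => a + (c - a) * s)).
  - auto.
  - apply lip1_paste. apply (lip1_ext (fun s => (2 * (b - a)) * s + a)). apply lip1_lin. intros; ring.
    apply (lip1_ext (fun s => (2 * (c - b)) * s + (b - (c - b)))). apply lip1_lin. intros; ring. field.
  - apply (lip1_ext (fun s => (c - a) * s + a)). apply lip1_lin. intros; ring.
  - intros s Hs. unfold inI in Hs. destruct Rle_dec; apply conv_I; auto; unfold inI; lra.
  - intros s Hs. apply conv_I; auto.
  - destruct Rle_dec; [ring|lra].
  - destruct Rle_dec; [lra|ring].
  - intros s Hs. unfold pconcat, sub. destruct Rle_dec; reflexivity.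
  - intros s Hs. reflexivity.
Qed.

Lemma hom_sub01 {X} op (p : R -> X) : is_path op p -> hom op (sub p 0 1) p.
Proof.
  intros Hp. apply (hom_ext_l op p). apply hom_refl; auto. intros s _. unfold sub. f_equal; ring.
Qed.

Lemma prev_sub {X} (p : R -> X) a b s : prev (sub p a b) s = sub p b a s.
Proof. unfold prev, sub. f_equal; ring. Qed.

Lemma path_in_concat {X} op (V : X -> Prop) p q : path_in op V p -> path_in op V q -> p 1 = q 0 ->
  path_in op V (pconcat p q).
Proof.
  intros [Hp Vp] [Hq Vq] E. split. apply path_concat; auto.
  intros t Ht. unfold pconcat, inI in *. destruct Rle_dec; [apply Vp|apply Vq]; unfold inI; lra.
Qed.

Lemma path_in_prev {X} op (V : X -> Prop) p : path_in op V p -> path_in op V (prev p).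
Proof.
  intros [Hp Vp]. split. apply path_prev; auto. intros t Ht. unfold prev, inI in *. apply Vp. unfold inI; lra.
Qed.

Lemma path_in_mono {X} op (V W : X -> Prop) p : path_in op V p -> (forall x, V x -> W x) -> path_in op W p.
Proof. intros [Hp Vp] S. split; auto. Qed.

Lemma path_in_sub {X} op (V : X -> Prop) p a b : is_path op p -> inI a -> inI b ->
  (forall u, Rmin a b <= u <= Rmax a b -> V (p u)) -> path_in op V (sub p a b).
Proof.
  intros Hp Ia Ib Hv. split. apply path_sub; auto. intros s Hs. unfold sub. apply Hv.
  apply conv_between; auto.
Qed.

Lemma real_ind (P : R -> Prop) : P 0 ->
  (forall t, inI t -> exists e, e > 0 /\ forall w v, inI w -> inI v -> t - e < w -> w <= v -> v < t + e -> P w -> P v) ->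
  P 1.
Proof.
  intros P0 Step.
  pose (S := fun u => inI u /\ P u).
  assert (Bd : bound S). { exists 1. intros x [Hx _]. unfold inI in Hx; lra. }
  assert (Ne : exists x, S x). { exists 0. split; auto. unfold inI; lra. }
  destruct (completeness S Bd Ne) as [m [Hub Hlub]].
  assert (m0 : 0 <= m). { apply Hub. split; auto. unfold inI; lra. }
  assert (m1 : m <= 1). { apply Hlub. intros x [Hx _]. unfold inI in Hx; lra. }
  destruct (Step m ltac:(unfold inI; lra)) as [e [He Hs]].
  destruct (classic (exists w, S w /\ m - e < w)) as [[w [[Iw Pw] Hw]]|Hn].
  - assert (Hwm : w <= m) by (apply Hub; split; auto).
    pose (v := Rmin 1 (m + e / 2)).
    assert (Hv1 : v <= 1) by apply Rmin_l. assert (Hv2 : v <= m + e/2) by apply Rmin_r.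
    assert (Hv3 : m <= v). { unfold v, Rmin; destruct Rle_dec; lra. }
    assert (Pv : P v). { apply (Hs w v); auto; unfold inI in *; lra. }
    assert (v <= m) by (apply Hub; split; auto; unfold inI; lra).
    assert (Ev : v = 1). { unfold v, Rmin in *; destruct Rle_dec; lra. }
    rewrite <- Ev; auto.
  - exfalso. assert (m <= m - e). { apply Hlub. intros x Sx. destruct (Rle_dec x (m - e)); auto.
      exfalso. apply Hn. exists x. split; auto. lra. }
    lra.
Qed.

Lemma C5 {X} op (a b : R -> X) : is_topology op -> is_path op a -> is_path op b -> a 1 = b 1 ->
  hom op (pconcat (pconcat a (prev b)) b) a.
Proof.
  intros T Ha Hb E.
  hmid (pconcat a (pconcat (prev b) b)). apply hom_assoc; auto; pth2.
  hmid (pconcat a (pconst (b 1))). apply hom_cr; [pth2| |pth2]. apply hom_inv_l; auto.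
  rewrite <- E. apply hom_unit_r; auto.
Qed.

Lemma C6 {X} op (p q L : R -> X) : is_topology op -> is_path op p -> is_path op q -> is_path op L ->
  p 1 = q 0 -> L 0 = q 1 -> L 1 = q 1 ->
  hom op (pconcat (pconcat p (pconcat (pconcat q L) (prev q))) q) (pconcat (pconcat p q) L).
Proof.
  intros T Hp Hq HL E1 E2 E3.
  hmid (pconcat p (pconcat (pconcat (pconcat q L) (prev q)) q)). apply hom_assoc; auto; pth2.
  hmid (pconcat p (pconcat q L)). apply hom_cr; [pth2| |pth2]. apply C5; auto; pth2.
  apply hom_sym, hom_assoc; auto.
Qed.

Lemma C7 {X} op (a b : R -> X) : is_topology op -> is_path op a -> is_path op b -> a 1 = b 0 ->
  hom op (pconcat (pconcat (prev b) (prev a)) (pconcat a b)) (pconst (b 1)).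
Proof.
  intros T Ha Hb E.
  hmid (pconcat (prev b) b). apply C1; auto; pth2. apply hom_inv_l; auto.
Qed.

Lemma SL {X} op x0 (H : (R -> X) -> Prop) a beta h : is_topology op -> is_pi1_subgroup op x0 H ->
  is_path op a -> a 0 = x0 -> is_path op beta -> beta 0 = a 1 -> beta 1 = a 1 ->
  H h -> hom op beta (pconcat (pconcat (prev a) h) a) -> sim H (pconcat a beta) a.
Proof.
  intros T HS Ha Ea Hb Eb0 Eb1 Hh Hbh. unfold sim.
  destruct (proj1 HS h Hh) as [Hph [Eh0 Eh1]].
  apply (H_hom op x0 H h); auto. apply hom_sym.
  hmid (pconcat (pconcat a (pconcat (pconcat (prev a) h) a)) (prev a)).
  - apply hom_cl; [pth2| |pth2]. apply hom_cr; auto.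
  - apply C3; auto; congruence.
Qed.

Ltac ends3 := repeat first [ rewrite pconcat_0 | rewrite pconcat_1 | rewrite prev_0 | rewrite prev_1
   | rewrite sub_0 | rewrite sub_1 ]; unfold pconst; auto; try congruence.
Ltac pth3 := repeat first [ apply path_concat | apply path_prev | apply path_const | apply path_sub ];
   try assumption; try (unfold inI in *; lra); ends3.

Definition Qp {X} op x0 (H : (R -> X) -> Prop) (f : R -> X) (u : R) : Prop :=
 forall W', op W' -> W' (f u) -> exists l W, op W /\ W (f u) /\ (forall x, W x -> W' x) /\
   path_connected_set op W /\ (forall KV, In KV l -> subbasic op KV) /\
   (forall KV, In KV l -> in_subbasic KV f) /\
   forall g, is_loop op x0 g -> (forall KV, In KV l -> in_subbasic KV g) -> W (g u) /\
     forall c, path_in op W c -> c 0 = f u -> c 1 = g u -> sim H (pconcat (sub f 0 u) c) (sub g 0 u).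

Lemma E1 {X} op (fw fwv c' gwv c : R -> X) : is_topology op ->
  is_path op fw -> is_path op fwv -> is_path op c' -> is_path op gwv -> is_path op c ->
  fw 1 = fwv 0 -> fwv 1 = c' 0 -> c' 1 = gwv 1 -> c 1 = gwv 0 -> c 0 = fw 1 ->
  hom op (pconcat (pconcat fw (pconcat (pconcat fwv c') (pconcat (prev gwv) (prev c)))) (pconcat c gwv))
         (pconcat (pconcat fw fwv) c').
Proof.
  intros T H1 H2 H3 H4 H5 E1 E2 E3 E4 E5.
  hmid (pconcat fw (pconcat (pconcat (pconcat fwv c') (pconcat (prev gwv) (prev c))) (pconcat c gwv))).
  apply hom_assoc; auto; pth3.
  hmid (pconcat fw (pconcat fwv c')).
  { apply hom_cr; [pth3| |pth3].
    hmid (pconcat (pconcat fwv c') (pconcat (pconcat (prev gwv) (prev c)) (pconcat c gwv))).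
    apply hom_assoc; auto; pth3.
    hmid (pconcat (pconcat fwv c') (pconst (gwv 1))). apply hom_cr; [pth3| |pth3]. apply C7; auto.
    replace (gwv 1) with (pconcat fwv c' 1) by ends3. apply hom_unit_r; auto; pth3. }
  apply hom_sym, hom_assoc; auto.
Qed.

Ltac UU := repeat match goal with | x := _ |- _ => progress unfold x end.

Lemma step_core {X} op x0 (H : (R -> X) -> Prop) (f : R -> X) (t e w v : R) (Vt Ut : X -> Prop) :
  is_topology op -> is_pi1_subgroup op x0 H -> locally_path_connected op ->
  is_path op f -> f 0 = x0 -> inI t -> inI w -> inI v -> t - e < w -> w <= v -> v < t + e ->
  op Vt -> (forall x, Vt x -> Ut x) ->
  (forall u, inI u -> t - e < u < t + e -> Vt (f u)) ->
  (forall b, path_in op Ut b -> b 0 = f t -> b 1 = f t ->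
     exists h, H h /\ hom op b (pconcat (pconcat (prev (sub f 0 t)) h) (sub f 0 t))) ->
  Qp op x0 H f w -> Qp op x0 H f v.
Proof.
  intros T HS LPC Hf Ef It Iw Iv Hw Hwv Hv HVt VU Hrange Semi Qw.
  intros W'' HW'' Hfv.
  assert (fwV : Vt (f w)) by (apply Hrange; auto; lra).
  destruct (Qw Vt HVt fwV) as [l [W [HW [Wfw [WV [Wpc [Lsb [Lf Lg]]]]]]]].
  assert (fvV : Vt (f v)) by (apply Hrange; auto; lra).
  destruct (LPC (fun x => Vt x /\ W'' x) (f v) (op_inter op _ _ T HVt HW'') (conj fvV Hfv))
    as [Wv [HWv [Wvf [WvS Wvpc]]]].
  exists ((fun s => w <= s <= v, Vt) :: (fun s => v <= s <= v, Wv) :: l), Wv.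
  split; auto. split; auto. split. intros x Hx; apply WvS; auto. split; auto.
  split.
  { intros KV [<-|[<-|Hin]]; auto; (split; [apply compact_P3|split]); simpl; auto;
      intros s Hs; unfold inI in *; lra. }
  split.
  { intros KV [<-|[<-|Hin]]; auto; intros s Hs; simpl in *.
    apply Hrange; unfold inI in *; try lra.
    replace s with v by lra. auto. }
  intros g Hg Hsat.
  destruct Hg as [Hgp [Eg0 Eg1]].
  assert (Hl : forall KV, In KV l -> in_subbasic KV g) by (intros; apply Hsat; simpl; auto).
  destruct (Lg g (conj Hgp (conj Eg0 Eg1)) Hl) as [Wgw Hcl].
  assert (gvWv : Wv (g v)). { apply (Hsat (fun s => v <= s <= v, Wv)); simpl; auto; lra. }
  assert (gV : forall s, w <= s <= v -> Vt (g s)). { intros s Hs. apply (Hsat (fun s => w <= s <= v, Vt)); simpl; auto. }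
  split; auto.
  intros c' Hc' Ec0 Ec1.
  destruct (Wpc (f w) (g w) Wfw Wgw) as [c [HcW [Ec0' Ec1']]].
  pose proof (Hcl c HcW Ec0' Ec1') as S0.
  assert (Pc : is_path op c) by apply HcW. assert (Pc' : is_path op c') by apply Hc'.
  assert (I0 : inI 0) by (unfold inI; lra).
  set (fw := sub f 0 w). set (ft := sub f 0 t). set (ftw := sub f t w). set (fwv := sub f w v).
  set (gwv := sub g w v). set (gw := sub g 0 w). set (fv := sub f 0 v). set (gv := sub g 0 v).
  set (L := pconcat (pconcat fwv c') (pconcat (prev gwv) (prev c))).
  set (beta := pconcat (pconcat ftw L) (prev ftw)).
  assert (Pfw : is_path op fw) by (unfold fw; pth3). assert (Pft : is_path op ft) by (unfold ft; pth3).
  assert (Pftw : is_path op ftw) by (unfold ftw; pth3). assert (Pfwv : is_path op fwv) by (unfold fwv; pth3).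
  assert (Pgwv : is_path op gwv) by (unfold gwv; pth3). assert (Pgw : is_path op gw) by (unfold gw; pth3).
  assert (Pfv : is_path op fv) by (unfold fv; pth3). assert (Pgv : is_path op gv) by (unfold gv; pth3).
  assert (PL : is_path op L) by (unfold L, fwv, gwv; pth3).
  assert (EL0 : L 0 = f w) by (unfold L, fwv; ends3).
  assert (EL1 : L 1 = f w) by (unfold L; ends3).
  assert (Bin : path_in op Ut beta).
  { apply (path_in_mono op Vt); auto. unfold beta, L.
    assert (Fin : forall a b, inI a -> inI b -> t - e < a < t + e -> t - e < b < t + e ->
                   path_in op Vt (sub f a b)).
    { intros a b Ia Ib Ha Hb. apply path_in_sub; auto. intros u Hu. apply Hrange.
      unfold Rmin, Rmax in Hu; unfold inI in *; destruct Rle_dec; lra.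
      unfold Rmin, Rmax in Hu; destruct Rle_dec; lra. }
    assert (Ftw : path_in op Vt ftw) by (apply Fin; auto; lra).
    apply path_in_concat; [apply path_in_concat| |].
    - auto.
    - apply path_in_concat; [apply path_in_concat| apply path_in_concat|].
      + apply Fin; auto; lra.
      + apply (path_in_mono op Wv); auto. intros x Hx; apply WvS; auto.
      + unfold fwv; ends3.
      + apply path_in_prev. apply path_in_sub; auto. intros u Hu. apply gV.
        unfold Rmin, Rmax in Hu; destruct Rle_dec; lra.
      + apply path_in_prev. apply (path_in_mono op W); auto.
      + unfold gwv; ends3.
      + unfold gwv, fwv; ends3.
    - unfold ftw, fwv; ends3.
    - apply path_in_prev; auto.
    - unfold ftw; ends3. }
  destruct (Semi beta Bin) as [h [Hh Hbh]].
  { unfold beta, ftw; ends3. } { unfold beta, ftw; ends3. }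
  assert (S1 : sim H (pconcat fw L) fw).
  { assert (A : sim H (pconcat ft beta) ft).
    { apply (SL op x0 H ft beta h); auto; UU; pth3. }
    assert (B : sim H (pconcat (pconcat ft beta) ftw) (pconcat ft ftw)).
    { apply (sim_rmul op x0); auto; UU; pth3. }
    assert (C : sim H (pconcat (pconcat ft ftw) L) (pconcat ft ftw)).
    { apply (sim_homl op x0 H (pconcat (pconcat ft beta) ftw)); auto.
      all: try solve [UU; pth3].
      unfold beta. apply C6; auto; UU; ends3. }
    assert (D : sim H (pconcat fw L) (pconcat ft ftw)).
    { apply (sim_homl op x0 H (pconcat (pconcat ft ftw) L)); auto.
      all: try solve [UU; pth3].
      apply hom_cl; auto. apply hom_sub_concat; auto. UU; ends3. }
    apply (sim_homr op x0 H _ (pconcat ft ftw)); auto.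
    all: try solve [UU; pth3].
    apply hom_sub_concat; auto. }
  assert (S2 : sim H (pconcat (pconcat fw L) (pconcat c gwv)) (pconcat fw (pconcat c gwv))).
  { apply (sim_rmul op x0); auto; UU; pth3. }
  assert (S3 : sim H (pconcat fv c') (pconcat fw (pconcat c gwv))).
  { apply (sim_homl op x0 H (pconcat (pconcat fw L) (pconcat c gwv))); auto.
    all: try solve [UU; pth3].
    hmid (pconcat (pconcat fw fwv) c').
    apply E1; auto; UU; ends3.
    apply hom_cl; auto. apply hom_sub_concat; auto. UU; ends3. }
  assert (S4 : sim H (pconcat fw (pconcat c gwv)) gv).
  { assert (A : sim H (pconcat (pconcat fw c) gwv) (pconcat gw gwv)).
    { apply (sim_rmul op x0); auto; UU; pth3. }
    assert (B : sim H (pconcat fw (pconcat c gwv)) (pconcat gw gwv)).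
    { apply (sim_homl op x0 H (pconcat (pconcat fw c) gwv)); auto.
      all: try solve [UU; pth3].
      apply hom_assoc; auto; UU; ends3. }
    apply (sim_homr op x0 H _ (pconcat gw gwv)); auto.
    all: try solve [UU; pth3].
    apply hom_sub_concat; auto. }
  apply (sim_trans op x0 H _ (pconcat fw (pconcat c gwv))); auto.
  all: try solve [UU; pth3].
Qed.

Lemma Q_base {X} op x0 (H : (R -> X) -> Prop) (f : R -> X) :
  is_topology op -> is_pi1_subgroup op x0 H -> locally_path_connected op ->
  semilocally_path_H_connected op x0 H -> is_path op f -> f 0 = x0 -> Qp op x0 H f 0.
Proof.
  intros T HS LPC Semi Hf Ef W' HW' Hw'.
  destruct (Semi (pconst x0) (path_const op x0 T) eq_refl) as [U0 [HU0 [Ux0 HU0b]]].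
  unfold pconst in Ux0.
  destruct (LPC (fun x => U0 x /\ W' x) (f 0) (op_inter op _ _ T HU0 HW') (conj (eq_ind_r U0 Ux0 Ef) Hw'))
    as [W [HW [Wf [WS Wpc]]]].
  exists ((fun s => 0 <= s <= 0, W) :: nil), W.
  split; auto. split; auto. split. intros x Hx; apply WS; auto. split; auto.
  split. { intros KV [<-|[]]. split. apply compact_P3. split; simpl; auto; intros s Hs; unfold inI; lra. }
  split. { intros KV [<-|[]]. intros s Hs; simpl in *. replace s with 0 by lra. auto. }
  intros g [Hg [Eg0 Eg1]] Hsat.
  assert (Wg : W (g 0)). { apply (Hsat (fun s => 0 <= s <= 0, W)); simpl; auto; lra. }
  split; auto. intros c Hc Ec0 Ec1.
  assert (Pc : is_path op c) by apply Hc.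
  assert (Hc0 : path_in op U0 c) by (apply (path_in_mono op W); auto; intros x Hx; apply WS; auto).
  assert (E0' : c 0 = pconst x0 1) by (unfold pconst; congruence).
  assert (E1' : c 1 = pconst x0 1) by (unfold pconst; congruence).
  destruct (HU0b c Hc0 E0' E1') as [h [Hh Hch]].
  assert (A : sim H (pconcat (pconst x0) c) (pconst x0)).
  { apply (SL op x0 H (pconst x0) c h); auto; try apply path_const; auto; unfold pconst; congruence. }
  assert (Ef0 : forall s, inI s -> sub f 0 0 s = pconst x0 s).
  { intros s _. unfold sub, pconst. rewrite <- Ef. f_equal; ring. }
  assert (Eg00 : forall s, inI s -> sub g 0 0 s = pconst x0 s).
  { intros s _. unfold sub, pconst. rewrite <- Eg0. f_equal; ring. }
  assert (Hce : hom op (pconst x0) (sub g 0 0)).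
  { apply hom_sym. apply (hom_ext_l op (pconst x0)). apply hom_refl, path_const; auto. auto. }
  assert (B : sim H (pconcat (pconst x0) c) (sub g 0 0)).
  { apply (sim_homr op x0 H _ (pconst x0)); auto.
    all: try solve [pth3; unfold inI; lra]. }
  apply (sim_homl op x0 H (pconcat (pconst x0) c)); auto.
  all: try solve [pth3; unfold inI; lra].
  apply hom_cl; auto. apply hom_sym. apply (hom_ext_l op (pconst x0)). apply hom_refl, path_const; auto. auto.
  all: unfold pconst; congruence.
Qed.

Lemma semi_to_open {X} op x0 (H : (R -> X) -> Prop) :
  is_topology op -> is_pi1_subgroup op x0 H -> locally_path_connected op ->
  semilocally_path_H_connected op x0 H -> open_in_pi1_qtop op x0 H.
Proof.
  intros T HS LPC Semi f Hf.
  destruct (proj1 HS f Hf) as [Pf [Ef0 Ef1]].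
  assert (Q1 : Qp op x0 H f 1).
  { apply real_ind. apply Q_base; auto.
    intros t It.
    destruct (Semi (sub f 0 t) (path_sub op f 0 t Pf ltac:(unfold inI; lra) It) ltac:(rewrite sub_0; auto))
      as [Ut [HUt [Uft Hb]]].
    rewrite sub_1 in Uft, Hb.
    destruct (LPC Ut (f t) HUt Uft) as [Vt [HVt [Vft [VU _]]]].
    destruct (Pf Vt HVt t It Vft) as [e [He Hc]].
    exists e. split; auto. intros w v Iw Iv Hw Hwv Hv.
    apply (step_core op x0 H f t e w v Vt Ut); auto.
    intros u Iu Hu. apply Hc; auto. apply Rabs_def1; lra. }
  destruct (Q1 (fun _ => True) (op_full op T) I) as [l [W [HW [Wf [_ [_ [Lsb [Lf Lg]]]]]]]].
  exists l. split; auto. split; auto.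
  intros g Hg Hsat. destruct Hg as [Pg [Eg0 Eg1]].
  destruct (Lg g (conj Pg (conj Eg0 Eg1)) Hsat) as [Wg Hcl].
  assert (Hc : path_in op W (pconst x0)).
  { split. apply path_const; auto. intros s _. unfold pconst. rewrite <- Ef1; auto. }
  pose proof (Hcl (pconst x0) Hc ltac:(unfold pconst; auto) ltac:(unfold pconst; auto)) as S.
  assert (I0 : inI 0) by (unfold inI; lra). assert (I1 : inI 1) by (unfold inI; lra).
  assert (Sfg : sim H f g).
  { assert (S' : sim H (pconcat (sub f 0 1) (pconst x0)) g).
    { apply (sim_homr op x0 H _ (sub g 0 1)); auto.
      all: try solve [pth3]. apply hom_sub01; auto. }
    assert (Hh : hom op (pconcat (sub f 0 1) (pconst x0)) f).
    { hmid (sub f 0 1). replace (pconst x0) with (pconst (sub f 0 1 1)) by (rewrite sub_1; congruence). apply hom_unit_r; auto. pth3.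
      apply hom_sub01; auto. }
    apply (sim_homl op x0 H (pconcat (sub f 0 1) (pconst x0))); auto.
    all: try solve [pth3]. }
  unfold sim in Sfg.
  assert (A : H (pconcat (prev (pconcat f (prev g))) f)) by (apply HS; auto; apply HS; auto).
  apply (H_hom op x0 H _ _ HS A).
  hmid (pconcat (pconcat g (prev f)) f).
  - apply hom_cl; [auto| |ends3].
    hmid (pconcat (prev (prev g)) (prev f)). apply hom_prev_concat; auto; pth3.
    apply hom_cl; [pth3| |ends3]. apply hom_prev_prev; auto.
  - apply C5; auto. congruence.
Qed.

Theorem proposition4p3 (X : Type) (op : (X -> Prop) -> Prop) (x0 : X)
  (H : (R -> X) -> Prop) :
  is_topology op ->
  connected op ->
  locally_path_connected op ->
  is_pi1_subgroup op x0 H ->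
  (semilocally_path_H_connected op x0 H <-> open_in_pi1_qtop op x0 H).
Proof.
  intros T _ LPC HS. split.
  - apply semi_to_open; auto.
  - apply open_to_semi; auto.
Qed.
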